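(* Let $\{p_\eta:\eta>0\}$ be a minimal exponential family of densities $p_\eta(x)=h(x)e^{\eta T(x)-A(\eta)}$ whose log-partition function has the form $A(\eta)=c_1\log\eta+c_2$ with constants $c_1\neq0$, $c_2\in\mathbb{R}$, and let $\ell$ denote the logarithmic loss. Fix $\eta,\eta_2>0$ and set $x=-\frac{\eta_2}{\eta}\exp\!\big(-\frac{\eta_2}{\eta}\big)\in[-1/e,0)$. Then the set of $\eta_1>0$ for which $\ell(p_{\eta_1},p_\eta)-\ell(p_{\eta_2},p_\eta)=0$ is exactly $\{-\eta\,W_0(x),\,-\eta\,W_{-1}(x)\}$, where $W_0$ and $W_{-1}$ are the two real branches of the Lambert function (the real solutions $w$ of $w e^{w}=x$ for $x\in[-1/e,0)$).
   Context: $\ell(p_{\eta_1},p_\eta)=\mathbb{E}[-\log p_{\eta_1}(Y)]$ for $Y\sim p_\eta$. A single-parameter exponential family is minimal if $T$ is not almost everywhere constant. *)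

(* Defs.v *)
From HB Require Import structures.
From mathcomp Require Import all_boot all_order all_algebra.
From mathcomp Require Import all_classical all_reals all_analysis.
Set Implicit Arguments. Unset Strict Implicit. Unset Printing Implicit Defensive.
Import Order.TTheory GRing.Theory Num.Theory.
Local Open Scope classical_set_scope.
Local Open Scope ring_scope.

Definition expfam_dens {X : Type} {R : realType}
  (h Ts : X -> R) (A : R -> R) (eta : R) : X -> R :=
  fun x => h x * expR (eta * Ts x - A eta).

Definition logloss {d} {X : measurableType d} {R : realType}
  (mu : {measure set X -> \bar R}) (q p : X -> R) : R :=
  Rintegral mu setT (fun x => p x * - ln (q x)).

Definition lambertW0 {R : realType} (x : R) : R :=
  xget 0 [set w : R | -1 <= w /\ w * expR w = x].
Definition lambertWm1 {R : realType} (x : R) : R :=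
  xget 0 [set w : R | w <= -1 /\ w * expR w = x].

(* Main.v *)
Require Import Defs.
From HB Require Import structures.
From mathcomp Require Import all_boot all_order all_algebra.
From mathcomp Require Import all_classical all_reals all_analysis.
From mathcomp Require Import ring lra.
Import Order.TTheory GRing.Theory Num.Theory.
Import numFieldNormedType.Exports.
Local Open Scope ring_scope.
Lemma expR_small (R : realType) (u : R) : `|u| <= 1/2 ->
  0 <= expR u - 1 - u <= 2 * u ^+ 2.
Proof.
move=> hu.
have h1 := expR_ge1Dx u.
have h2 := expR_ge1Dx (- u).
have hE : expR u * expR (- u) = 1 by rewrite -expRD subrr expR0.
have hp := expR_gt0 u. have hp2 := expR_gt0 (-u).
have [hu1 hu2] : -(1/2) <= u /\ u <= 1/2.
  by move: hu; rewrite ler_norml => /andP[].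
apply/andP; split; first lra.
have h3 : expR u * (1 - u) <= 1 by nra.
nra.
Qed.

Lemma tangent_eq (R : realType) (a c : R) :
  (forall u : R, a * (expR u - 1) <= c * u) -> a = c.
Proof.
move=> H.
case: (eqVneq a c) => // hne; exfalso.
have hD : c - a != 0 by rewrite subr_eq0 eq_sym.
set D := c - a in hD.
have ka : - `|a| <= a <= `|a| by rewrite -ler_norml.
have kD : `|D| > 0 by rewrite normr_gt0.
have kD2 : - `|D| <= D <= `|D| by rewrite -ler_norml.
have ka0 : 0 <= `|a| by [].
set t := `|D| / (2 * `|a| + 2 * `|D| + 2).
have ht0 : 0 < t by rewrite /t divr_gt0 //; lra.
have ht1 : t * (2 * `|a| + 2 * `|D| + 2) = `|D|.
  by rewrite /t mulfVK //; apply/eqP; lra.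
have hDt : 2 * `|a| * t < `|D| by nra.
have ht2 : t <= 1/2 by nra.
have [u [hu hDu]] : exists u : R, `|u| = t /\ D * u = - `|D| * t.
  case: (ltrP 0 D) => hD0.
    exists (- t); rewrite normrN gtr0_norm //; split => //.
    by rewrite gtr0_norm //; ring.
  exists t; rewrite gtr0_norm //; split => //.
  by rewrite ler0_norm; [ring| ].
have [g0 g1] : 0 <= expR u - 1 - u /\ expR u - 1 - u <= 2 * u ^+ 2.
  by apply/andP; apply: expR_small; rewrite hu.
have hu2 : u ^+ 2 = t ^+ 2 by rewrite -real_normK ?hu // num_real.
have := H u.
have : a * (expR u - 1) = a * (expR u - 1 - u) + a * u by ring.
move=> ->.
have : - `|a| * (expR u - 1 - u) <= a * (expR u - 1 - u) by nra.
rewrite /D in hDu.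
nra.
Qed.
Section L.
Variable R : realType.
Implicit Types a b u w : R.

Lemma expR_inv_lt (d : R) : d != 0 -> expR d * (1 - d) < 1.
Proof.
move=> hd.
have h : 1 + - d < expR (- d) by apply: expR_gt1Dx; rewrite oppr_eq0.
have hE : expR d * expR (- d) = 1 by rewrite -expRD subrr expR0.
have hp := expR_gt0 d.
nra.
Qed.

Lemma phi_ge w : - expR (-1) <= w * expR w.
Proof.
set y := w + 1.
have hw : w = y - 1 by rewrite /y; ring.
have hE : expR w = expR (-1) * expR y by rewrite -expRD hw; congr expR; ring.
have h1 : 1 + - y <= expR (- y) := expR_ge1Dx _.
have hE2 : expR y * expR (- y) = 1 by rewrite -expRD subrr expR0.
have hp := expR_gt0 y. have hp1 := expR_gt0 (-1 : R).
rewrite hE hw.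
have : (y - 1) * expR y >= -1 by nra.
nra.
Qed.

Lemma phi_incr a b : -1 <= a -> a < b -> a * expR a < b * expR b.
Proof.
move=> ha hab.
set d := b - a.
have hdd : d = b - a by [].
have hd : 0 < d by rewrite /d subr_gt0.
have hE : expR b = expR a * expR d by rewrite -expRD /d; congr expR; ring.
have hpa := expR_gt0 a.
suff : a < b * expR d.
  move=> h; rewrite hE; nra.
case: (lerP 0 b) => hb.
  have := expR_ge1Dx d; nra.
have hd1 : d < 1 by lra.
have h := @expR_inv_lt d (lt0r_neq0 hd).
have hX : b * expR d * (1 - d) > b by nra.
have hb2 : b >= a * (1 - d) by nra.
nra.
Qed.

Lemma phi_decr a b : b <= -1 -> a < b -> b * expR b < a * expR a.
Proof.
move=> hb hab.
set d := a - b.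
have hdd : d = a - b by [].
have hd : d < 0 by rewrite /d subr_lt0.
have hE : expR a = expR b * expR d by rewrite -expRD /d; congr expR; ring.
have hpb := expR_gt0 b.
suff : b < a * expR d.
  move=> h; rewrite hE; nra.
have h := @expR_inv_lt d (ltr0_neq0 hd).
have hX : a * expR d * (1 - d) > a by nra.
have ha2 : a >= b * (1 - d) by nra.
nra.
Qed.

Lemma phi_cont : continuous (fun w : R => w * expR w).
Proof.
move=> w; apply: continuousM; [exact: cvg_id | exact: continuous_expR].
Qed.

Lemma phi_neg w : w * expR w < 0 -> w < 0.
Proof. move=> h; have := expR_gt0 w; case: (ltrP w 0) => // hw; nra. Qed.

Lemma lambert_set u : u < 0 -> forall w,
  (w < 0 /\ w * expR w = u * expR u) <->
  (w = lambertW0 (u * expR u) \/ w = lambertWm1 (u * expR u)).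
Proof.
move=> hu.
set x := u * expR u.
have hx : x < 0 by rewrite /x; have := expR_gt0 u; nra.
have hxge : - expR (-1) <= x by apply: phi_ge.
have he1 : (-1) * expR (-1) = - expR (-1) :> R by ring.
have ex0 : exists w, -1 <= w /\ w * expR w = x.
  case: (lerP (-1) u) => hu1; first by exists u.
  have i1 : (-1 : R) <= 0 by lra.
  have i2 : {within `[(-1 : R), 0], continuous (fun w : R => w * expR w)}%classic
    by exact: continuous_subspaceT phi_cont.
  have i3 : Num.min ((-1) * expR (-1)) (0 * expR 0) <= x <= Num.max ((-1) * expR (-1)) (0 * expR (0:R)).
    rewrite mul0r he1 (@min_l _ _ (- expR (-1)) 0) ?(@max_r _ _ (- expR (-1)) 0);
      first (apply/andP; split; lra);
      have := expR_gt0 (-1 : R); lra.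
  have [c hc hcx] := @IVT R (fun w => w * expR w) (-1) 0 x i1 i2 i3.
  exists c; split => //. by move: hc; rewrite in_itv /= => /andP[].
have exm1 : exists w, w <= -1 /\ w * expR w = x.
  case: (lerP u (-1)) => hu1; first by exists u.
  have [k hkx hk] : exists2 k, k = - x & 0 < k by exists (-x) => //; lra.
  have [W hkW] : exists W, k * W = - k - 4.
    by exists ((- k - 4) / k); rewrite mulrC divfK //; apply/eqP; lra.
  have hW : W <= -1 by nra.
  have hWx : x <= W * expR W.
    have [y hy] : exists y, W = - y by exists (- W); rewrite opprK.
    have h1 : 1 + y / 2 <= expR (y / 2) := expR_ge1Dx _.
    have h2 : expR y = expR (y / 2) * expR (y / 2) by rewrite -expRD; congr expR; field.
    have h3 : expR W * expR y = 1 by rewrite hy -expRD addNr expR0.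
    have hp := expR_gt0 W. have hp2 := expR_gt0 (y/2).
    have hy1 : 1 <= y by lra.
    have hEy : y * y / 4 <= expR y by nra.
    have hky : k * y = k + 4 by rewrite hy mulrN in hkW; lra.
    have hh : y <= k * expR y by nra.
    rewrite hy -hy; nra.
  have i1 : W <= -1 by lra.
  have i2 : {within `[W, -1], continuous (fun w : R => w * expR w)}%classic
    by exact: continuous_subspaceT phi_cont.
  have i3 : Num.min (W * expR W) ((-1) * expR (-1)) <= x <= Num.max (W * expR W) ((-1) * expR (-1)).
    rewrite he1 (@min_r _ _ (W * expR W)) ?(@max_l _ _ (W * expR W)).
    + apply/andP; split; lra.
    + exact: phi_ge.
    + exact: phi_ge.
  have [c hc hcx] := @IVT R (fun w => w * expR w) W (-1) x i1 i2 i3.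
  exists c; split => //. by move: hc; rewrite in_itv /= => /andP[].
move=> w; split.
  move=> [hw hwx].
  case: (lerP (-1) w) => hw1.
    left; apply/esym/xget_unique; first by split.
    move=> y [hy hyx].
    case: (ltgtP y w) => // hh.
    + by have := phi_incr _ _ hy hh; lra.
    + by have := phi_incr _ _ hw1 hh; lra.
  right; apply/esym/xget_unique; first by split => //; lra.
  move=> y [hy hyx].
  case: (ltgtP y w) => // hh.
  + by have := phi_decr _ _ (ltW hw1) hh; lra.
  + by have := phi_decr _ _ hy hh; lra.
case=> ->.
  have [h1 h2] := xgetPex 0 ex0.
  by split => //; apply: phi_neg; rewrite h2.
have [h1 h2] := xgetPex 0 exm1.
by rewrite /lambertWm1; split => //; lra.
Qed.
End L.

Lemma ln_expfam (R : realType) (hx y : R) : 0 < hx -> ln (hx * expR y) = ln hx + y.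
Proof.
move=> h; rewrite lnM ?expRK //; rewrite posrE ?expR_gt0 //.
Qed.

Lemma int_sub (R : realType) (d : measure_display) (X : measurableType d)
  (mu : {measure set X -> \bar R}) (f g : X -> R) :
  mu.-integrable setT (EFin \o f) -> mu.-integrable setT (EFin \o g) ->
  mu.-integrable setT (EFin \o (fun x => f x - g x)).
Proof.
move=> hf hg; apply: (eq_integrable _ _ _ _ (integrableB _ hf hg)) => //.
Qed.

Lemma int_add (R : realType) (d : measure_display) (X : measurableType d)
  (mu : {measure set X -> \bar R}) (f g : X -> R) :
  mu.-integrable setT (EFin \o f) -> mu.-integrable setT (EFin \o g) ->
  mu.-integrable setT (EFin \o (fun x => f x + g x)).
Proof.
move=> hf hg; apply: (eq_integrable _ _ _ _ (integrableD _ hf hg)) => //.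
Qed.

Lemma int_scale (R : realType) (d : measure_display) (X : measurableType d)
  (mu : {measure set X -> \bar R}) (f : X -> R) (k : R) :
  mu.-integrable setT (EFin \o f) ->
  mu.-integrable setT (EFin \o (fun x => k * f x)).
Proof.
move=> hf; apply: (eq_integrable _ _ _ _ (integrableZl _ k hf)) => //.
Qed.

Lemma dens_int (R : realType) (d : measure_display) (X : measurableType d)
  (mu : {measure set X -> \bar R}) (h Ts : X -> R) (A : R -> R)
  (h_meas : measurable_fun setT h) (h_ge0 : forall x, 0 <= h x)
  (T_meas : measurable_fun setT Ts) (t : R)
  (hA : (\int[mu]_x (h x * expR (t * Ts x))%:E = (expR (A t))%:E)%E) :
  mu.-integrable setT (EFin \o expfam_dens h Ts A t) /\
  Rintegral mu setT (expfam_dens h Ts A t) = 1.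
Proof.
have hm : measurable_fun setT (fun x => h x * expR (t * Ts x)).
  apply: measurable_realfun.measurable_funM => //.
  have mT : measurable_fun setT (fun x => t * Ts x).
    by apply: measurable_realfun.measurable_funM => //.
  exact: (measurableT_comp (@measurable_realfun.measurable_expR R) mT).
have eqd : forall x, expfam_dens h Ts A t x = expR (- A t) * (h x * expR (t * Ts x)).
  by move=> x; rewrite /expfam_dens mulrCA -expRD addrC.
have hint : (\int[mu]_x (expfam_dens h Ts A t x)%:E = 1%:E)%E.
  under eq_integral do rewrite eqd EFinM.
  rewrite ge0_integralZl //.
  - by rewrite hA -EFinM -expRD addNr expR0.
  - by apply/measurable_realfun.measurable_EFinP.
  - by move=> x _; rewrite (_ : 0%E = 0%:E) // lee_fin mulr_ge0 ?expR_ge0.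
have hge : forall x, 0 <= expfam_dens h Ts A t x.
  by move=> x; rewrite /expfam_dens mulr_ge0 ?expR_ge0.
split; last by rewrite /Rintegral hint.
apply/integrableP; split.
  apply/measurable_realfun.measurable_EFinP.
  apply: (eq_measurable_fun (fun x => expR (- A t) * (h x * expR (t * Ts x)))).
    by move=> x _; rewrite eqd.
  exact: (measurable_realfun.measurable_funM (f:=cst (expR (- A t))) (measurable_cst _) hm).
under eq_integral do rewrite /= ger0_norm ?hge //.
by rewrite hint ltry.
Qed.

Lemma F_ident_val (R : realType) (hx Tx e t Ae At : R) : 0 <= hx ->
  hx * expR (e * Tx - Ae) * - ln (hx * expR (t * Tx - At)) =
  hx * expR (e * Tx - Ae) * (- ln hx) - t * (hx * expR (e * Tx - Ae) * Tx)
  + At * (hx * expR (e * Tx - Ae)).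
Proof.
rewrite le0r => /orP[/eqP -> | hp]; first by rewrite !mul0r; ring.
rewrite ln_expfam //; ring.
Qed.

Lemma KL_val (R : realType) (hx Tx e t Ae At : R) : 0 <= hx ->
  hx * expR (e * Tx - Ae) - hx * expR (t * Tx - At) <=
  hx * expR (e * Tx - Ae) * - ln (hx * expR (t * Tx - At))
  - hx * expR (e * Tx - Ae) * - ln (hx * expR (e * Tx - Ae)).
Proof.
rewrite le0r => /orP[/eqP -> | hp]; first by rewrite !mul0r; lra.
rewrite !ln_expfam //.
set a := e * Tx - Ae; set b := t * Tx - At.
have hE : expR b = expR a * expR (b - a) by rewrite -expRD; congr expR; ring.
have h1 := expR_ge1Dx (b - a).
have hpa := expR_gt0 a.
rewrite hE.
have hP : 0 < hx * expR a by apply: mulr_gt0.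
nra.
Qed.

Lemma phi_repr (R : realType) (t eta : R) : 0 < t -> 0 < eta ->
  (- (t / eta)) * expR (- (t / eta)) = - eta^-1 * expR (ln t - t / eta).
Proof.
move=> ht he; rewrite expRD lnK ?posrE //; ring.
Qed.

Lemma key_equiv (R : realType) (eta t eta2 c1 c2 : R) : 0 < t -> 0 < eta -> 0 < eta2 ->
  c1 != 0 ->
  (eta2 - t) * (c1 / eta) + (c1 * ln t + c2 - (c1 * ln eta2 + c2)) = 0 <->
  (- (t / eta)) * expR (- (t / eta)) = (- (eta2 / eta)) * expR (- (eta2 / eta)).
Proof.
move=> ht he he2 hc1.
rewrite !phi_repr //.
have hid : (eta2 - t) * (c1 / eta) + (c1 * ln t + c2 - (c1 * ln eta2 + c2)) =
  c1 * ((ln t - t / eta) - (ln eta2 - eta2 / eta)) by ring.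
rewrite hid; split.
  move/eqP; rewrite mulf_eq0 (negbTE hc1) /= subr_eq0 => /eqP ->; done.
move=> H.
have H2 : expR (ln t - t / eta) = expR (ln eta2 - eta2 / eta).
  apply: (mulfI (x := - eta^-1)) => //.
  by rewrite oppr_eq0 invr_eq0 gt_eqF.
by rewrite (expR_inj H2) subrr mulr0.
Qed.

Local Open Scope classical_set_scope.
Local Open Scope ring_scope.

Theorem theorem6 (R : realType) (d : measure_display) (X : measurableType d)
  (mu : {measure set X -> \bar R}) (h Ts : X -> R) (A : R -> R) (c1 c2 : R)
  (h_meas : measurable_fun setT h) (h_ge0 : forall x, 0 <= h x)
  (T_meas : measurable_fun setT Ts)
  (* A is the log-partition function of the family on eta > 0 *)
  (hA : forall eta : R, 0 < eta ->
     (\int[mu]_x (h x * expR (eta * Ts x))%:E = (expR (A eta))%:E)%E)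
  (* minimality: T is not almost everywhere constant (on the support of h) *)
  (hmin : ~ (exists c : R, {ae mu, forall x, 0 < h x -> Ts x = c}))
  (* all log losses between members of the family are finite *)
  (hfin : forall eta eta' : R, 0 < eta -> 0 < eta' ->
     mu.-integrable setT
       (fun x => (expfam_dens h Ts A eta x * - ln (expfam_dens h Ts A eta' x))%:E))
  (hc1 : c1 != 0)
  (hAform : forall eta : R, 0 < eta -> A eta = c1 * ln eta + c2)
  (eta eta2 : R) (heta : 0 < eta) (heta2 : 0 < eta2) :
  let x := - (eta2 / eta) * expR (- (eta2 / eta)) in
  [set eta1 : R | 0 < eta1 /\
     logloss mu (expfam_dens h Ts A eta1) (expfam_dens h Ts A eta)
     - logloss mu (expfam_dens h Ts A eta2) (expfam_dens h Ts A eta) = 0]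
  = [set - eta * lambertW0 x; - eta * lambertWm1 x].
Proof.
move=> x.
have hint : forall t, 0 < t ->
    mu.-integrable setT (EFin \o expfam_dens h Ts A t) /\
    Rintegral mu setT (expfam_dens h Ts A t) = 1.
  by move=> t ht; apply: dens_int => //; apply: hA.
pose P := expfam_dens h Ts A eta.
pose F t := fun y => P y * - ln (expfam_dens h Ts A t y).
pose G := fun y => P y * - ln (h y).
pose PT := fun y => P y * Ts y.
have Fint : forall t, 0 < t -> mu.-integrable setT (EFin \o F t).
  by move=> t ht; exact: hfin.
have Fid : forall t y, F t y = G y - t * PT y + A t * P y.
  by move=> t y; rewrite /F /G /PT /P /expfam_dens F_ident_val.
have PTint : mu.-integrable setT (EFin \o PT).
  apply: (eq_integrable _ (EFin \o (fun y => F 1 y - F 2 y - (A 1 - A 2) * P y))) => //.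
    by move=> y _ /=; rewrite !Fid; congr EFin; ring.
  apply: int_sub; first by apply: int_sub; apply: Fint; lra.
  by apply: int_scale; exact: (hint eta heta).1.
set m := Rintegral mu setT PT.
have Diff : forall t s, 0 < t -> 0 < s ->
    logloss mu (expfam_dens h Ts A t) (expfam_dens h Ts A eta)
    - logloss mu (expfam_dens h Ts A s) (expfam_dens h Ts A eta)
    = (s - t) * m + (A t - A s).
  move=> t s ht hs.
  rewrite /logloss -RintegralB //; try exact: Fint.
  have -> : Rintegral mu setT (fun y => F t y - F s y) =
      Rintegral mu setT (fun y => (s - t) * PT y + (A t - A s) * P y).
    by apply: eq_Rintegral => y _; rewrite !Fid; ring.
  rewrite RintegralD //; last 2 first.
  - by apply: int_scale.
  - by apply: int_scale; exact: (hint eta heta).1.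
  rewrite !RintegralZl //; last exact: (hint eta heta).1.
  by rewrite (hint eta heta).2 mulr1.
have KL : forall t, 0 < t ->
    0 <= logloss mu (expfam_dens h Ts A t) (expfam_dens h Ts A eta)
    - logloss mu (expfam_dens h Ts A eta) (expfam_dens h Ts A eta).
  move=> t ht.
  have -> : 0 = Rintegral mu setT (fun y => P y - expfam_dens h Ts A t y).
    rewrite RintegralB //; try exact: (hint _ _).1.
    by rewrite (hint eta heta).2 (hint t ht).2 subrr.
  rewrite /logloss -RintegralB //; try exact: Fint.
  apply: le_Rintegral => //.
  - by apply: int_sub; [exact: (hint eta heta).1 | exact: (hint t ht).1].
  - by apply: int_sub; apply: Fint.
  - by move=> y _; rewrite /P /expfam_dens; apply: KL_val.
have hm : eta * m = c1.
  apply: tangent_eq => u.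
  have hpos : 0 < eta * expR u by apply: mulr_gt0 => //; exact: expR_gt0.
  have := KL _ hpos.
  rewrite Diff // !hAform // lnM ?posrE ?expR_gt0 // expRK.
  nra.
have hmv : m = c1 / eta by rewrite -hm; by field; rewrite gt_eqF.
have hu : - (eta2 / eta) < 0 by rewrite oppr_lt0 divr_gt0.
apply/seteqP; split => t /=.
  move=> [ht hd].
  rewrite Diff // !hAform // hmv in hd.
  have hk := (@key_equiv R eta t eta2 c1 c2 ht heta heta2 hc1).1 hd.
  have hneg : - (t / eta) < 0 by rewrite oppr_lt0 divr_gt0.
  have := (@lambert_set R _ hu (-(t/eta))).1 (conj hneg hk).
  case=> hw; [left | right]; rewrite -hw; by field; rewrite gt_eqF.
move=> ht.
have [w [hwt hw]] : exists w, t = - eta * w /\ (w = lambertW0 x \/ w = lambertWm1 x).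
  by case: ht => ->; eexists; split; [reflexivity | left | reflexivity | right].
have [hw0 hwx] := (@lambert_set R _ hu w).2 hw.
have htp : 0 < t by rewrite hwt; nra.
split => //.
rewrite Diff // !hAform // hmv.
apply/(@key_equiv R eta t eta2 c1 c2 htp heta heta2 hc1).
have -> : - (t / eta) = w by rewrite hwt; by field; rewrite gt_eqF.
exact: hwx.
Qed.
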